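(* For every $F$-linear subspace $V$ of $M_n$ there exists a quasi-polynomial $P\in\mathcal C\langle X\rangle$ such that $\mathrm{im}(P)=V$, where for $P$ involving only $x_1,\dots,x_m$ (and coordinates $x^{(k)}_{ij}$, $k\le m$), $\mathrm{im}(P)=\{P(A_1,\dots,A_m): A_1,\dots,A_m\in M_n\}$.
   Context: Let $F$ be a field of characteristic $0$, $n\ge1$, $M_n=M_n(F)$. Let $\mathcal C=F[x^{(k)}_{ij}:1\le i,j\le n,\ k=1,2,\dots]$ and $X=\{x_1,x_2,\dots\}$ noncommuting indeterminates; quasi-polynomials are elements of the free $\mathcal C$-algebra $\mathcal C\langle X\rangle$. The evaluation $P(A_1,\dots,A_m)$ at $A_k=(a^{(k)}_{ij})\in M_n$ is obtained by substituting $A_k$ for $x_k$ and $a^{(k)}_{ij}$ for $x^{(k)}_{ij}$. *)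

(* Defs.v *)
From HB Require Import structures.
From mathcomp Require Import all_boot all_order all_algebra.
Set Implicit Arguments. Unset Strict Implicit. Unset Printing Implicit Defensive.
Import GRing.Theory.
Local Open Scope ring_scope.

(* Quasi-polynomials over C = F[x^(k)_ij], as terms of the free C-algebra
   C<X>:  constants of F, commuting coordinate indeterminates x^(k)_ij
   (central), noncommuting indeterminates x_k, sums and products.
   Every element of C<X> is represented by such a term and conversely. *)
Inductive quasipoly (F : Type) (n : nat) : Type :=
| QConst of F
| QCoord of nat & 'I_n & 'I_n
| QVar of nat
| QAdd of quasipoly F n & quasipoly F n
| QMul of quasipoly F n & quasipoly F n.

Fixpoint qeval (F : fieldType) (n : nat) (A : nat -> 'M[F]_n) (P : quasipoly F n)
  : 'M[F]_n :=
  match P with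
  | QConst c => c%:M
  | QCoord k i j => (A k i j)%:M
  | QVar k => A k
  | QAdd P1 P2 => qeval A P1 + qeval A P2
  | QMul P1 P2 => qeval A P1 *m qeval A P2
  end.

Definition qimage (F : fieldType) (n : nat) (P : quasipoly F n) (B : 'M[F]_n) : Prop :=
  exists A : nat -> 'M[F]_n, qeval A P = B.

(* Main.v *)
Require Import Defs.
From HB Require Import structures.
From mathcomp Require Import all_boot all_order all_algebra.
From mathcomp Require Import fingroup perm.
Set Implicit Arguments. Unset Strict Implicit. Unset Printing Implicit Defensive.
Import GRing.Theory.
Local Open Scope ring_scope.

Definition srep (F : fieldType) (n : nat) (f : (nat -> 'M[F]_n) -> F) :=
  exists P : quasipoly F n, forall A, qeval A P = (f A)%:M.
Definition mrep (F : fieldType) (n : nat) (g : (nat -> 'M[F]_n) -> 'M[F]_n) :=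
  exists P : quasipoly F n, forall A, qeval A P = g A.

Lemma srep_ext (F : fieldType) n (f g : (nat -> 'M[F]_n) -> F) :
  (forall A, f A = g A) -> srep f -> srep g.
Proof. by move=> e [P hP]; exists P => A; rewrite hP e. Qed.

Lemma mrep_ext (F : fieldType) n (f g : (nat -> 'M[F]_n) -> 'M[F]_n) :
  (forall A, f A = g A) -> mrep f -> mrep g.
Proof. by move=> e [P hP]; exists P => A; rewrite hP e. Qed.

Lemma srep_const (F : fieldType) n (c : F) : srep (fun A : nat -> 'M[F]_n => c).
Proof. by exists (QConst n c). Qed.

Lemma srep_coord (F : fieldType) n k (i j : 'I_n) :
  srep (fun A : nat -> 'M[F]_n => A k i j).
Proof. by exists (QCoord F k i j). Qed.

Lemma srep_add (F : fieldType) n (f g : (nat -> 'M[F]_n) -> F) :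
  srep f -> srep g -> srep (fun A => f A + g A).
Proof. by move=> [P hP] [Q hQ]; exists (QAdd P Q) => A /=; rewrite hP hQ raddfD. Qed.

Lemma srep_mul (F : fieldType) n (f g : (nat -> 'M[F]_n) -> F) :
  srep f -> srep g -> srep (fun A => f A * g A).
Proof.
by move=> [P hP] [Q hQ]; exists (QMul P Q) => A /=; rewrite hP hQ -scalar_mxM.
Qed.

Lemma srep_sum (F : fieldType) n (I : Type) (r : seq I) (p : pred I)
  (f : I -> (nat -> 'M[F]_n) -> F) :
  (forall i, srep (f i)) -> srep (fun A => \sum_(i <- r | p i) f i A).
Proof.
move=> h; elim: r => [|a r IH].
  by apply: (srep_ext _ (srep_const _ 0)) => A; rewrite big_nil.
case: (boolP (p a)) => pa.
  by apply: (srep_ext _ (srep_add (h a) IH)) => A; rewrite big_cons pa.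
by apply: (srep_ext _ IH) => A; rewrite big_cons (negbTE pa).
Qed.

Lemma srep_prod (F : fieldType) n (I : Type) (r : seq I) (p : pred I)
  (f : I -> (nat -> 'M[F]_n) -> F) :
  (forall i, srep (f i)) -> srep (fun A => \prod_(i <- r | p i) f i A).
Proof.
move=> h; elim: r => [|a r IH].
  by apply: (srep_ext _ (srep_const _ 1)) => A; rewrite big_nil.
case: (boolP (p a)) => pa.
  by apply: (srep_ext _ (srep_mul (h a) IH)) => A; rewrite big_cons pa.
by apply: (srep_ext _ IH) => A; rewrite big_cons (negbTE pa).
Qed.

Lemma srep_det (F : fieldType) n m (M : (nat -> 'M[F]_n) -> 'M[F]_m) :
  (forall i j, srep (fun A => M A i j)) -> srep (fun A => \det (M A)).
Proof.
move=> h; apply: (srep_ext (f := fun A => \sum_(s : 'S_m) (-1) ^+ s * \prod_i M A i (s i))).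
  by [].
apply: srep_sum => s; apply: srep_mul; first exact: srep_const.
by apply: srep_prod => i; apply: h.
Qed.

Lemma srep_adj (F : fieldType) n m (M : (nat -> 'M[F]_n) -> 'M[F]_m) :
  (forall i j, srep (fun A => M A i j)) -> forall i j, srep (fun A => \adj (M A) i j).
Proof.
move=> h i j.
apply: (srep_ext (f := fun A => (-1) ^+ (j + i) * \det (row' j (col' i (M A))))).
  by move=> A; rewrite mxE.
apply: srep_mul; first exact: srep_const.
by apply: srep_det => a b; apply: (srep_ext _ (h _ _)) => A; rewrite !mxE.
Qed.

Lemma mrep_var (F : fieldType) n k : mrep (fun A : nat -> 'M[F]_n => A k).
Proof. by exists (QVar F n k). Qed.

Lemma mrep_scale (F : fieldType) n (f : (nat -> 'M[F]_n) -> F) g :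
  srep f -> mrep g -> mrep (fun A => f A *: g A).
Proof.
by move=> [P hP] [Q hQ]; exists (QMul P Q) => A /=; rewrite hP hQ mul_scalar_mx.
Qed.

Lemma mrep_sum (F : fieldType) n (I : Type) (r : seq I) (p : pred I)
  (f : I -> (nat -> 'M[F]_n) -> 'M[F]_n) :
  (forall i, mrep (f i)) -> mrep (fun A => \sum_(i <- r | p i) f i A).
Proof.
move=> h; elim: r => [|a r IH].
  by exists (QConst n 0) => A /=; rewrite big_nil raddf0.
case: (boolP (p a)) => pa.
  move: (h a) IH => [P hP] [Q hQ].
  by exists (QAdd P Q) => A /=; rewrite hP hQ big_cons pa.
by apply: (mrep_ext _ IH) => A; rewrite big_cons (negbTE pa).
Qed.

Definition Hm (F : fieldType) n (A : nat -> 'M[F]_n) : 'M[F]_(n * n) :=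
  \matrix_(k, i) mxvec (A k) 0 i.

Lemma key (F : fieldType) n (A : nat -> 'M[F]_n) (M : 'M[F]_n) :
  \sum_(k < n * n) ((mxvec M *m \adj (Hm A)) 0 k) *: A k = \det (Hm A) *: M.
Proof.
apply: (can_inj mxvecK).
rewrite linear_sum linearZ /=.
transitivity ((mxvec M *m \adj (Hm A)) *m Hm A); last first.
  by rewrite -mulmxA mul_adj_mx mul_mx_scalar.
rewrite [RHS]mulmx_sum_row; apply: eq_bigr => k _; rewrite linearZ /=; congr (_ *: _).
by apply/rowP => i; rewrite !mxE.
Qed.

Lemma mrep_det_scale (F : fieldType) n (M : 'M[F]_n) :
  mrep (fun A => \det (Hm A) *: M).
Proof.
apply: (@mrep_ext F n _ _ (fun A => key A M)).
apply: mrep_sum => k; apply: mrep_scale; last exact: mrep_var.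
apply: (srep_ext (f := fun A => \sum_j mxvec M 0 j * \adj (Hm A) j k)).
  by move=> A; rewrite !mxE.
apply: srep_sum => j; apply: srep_mul; first exact: srep_const.
apply: srep_adj => a b.
case/mxvec_indexP: b => i j'.
by apply: (srep_ext _ (srep_coord _ a i j')) => A; rewrite mxE mxvecE.
Qed.

Theorem mainTheorem3 (F : fieldType) (n : nat) (hF : [pchar F] =i pred0)
  (hn : (0 < n)%N) (V : {vspace 'M[F]_n}) :
  exists P : quasipoly F n, forall B : 'M[F]_n, B \in V <-> qimage P B.
Proof.
case: n hn V => // n _ V.
set N := (n.+1 * n.+1)%N.
have [P hP] : mrep (fun A => \sum_(l < \dim V)
    A (N + l)%N 0 0 *: (\det (Hm A) *: (vbasis V)`_l)).
  apply: mrep_sum => l; apply: mrep_scale; first exact: srep_coord.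
  exact: mrep_det_scale.
exists P => B; split.
- move=> BV.
  pose c (m : nat) : F := \sum_(l < \dim V) ((m == N + l)%N%:R * coord (vbasis V) l B).
  pose A (m : nat) : 'M[F]_n.+1 :=
    if (m < N)%N then vec_mx (\row_(i < N) ((i : nat) == m)%:R) else (c m)%:M.
  exists A; rewrite hP.
  have -> : Hm A = 1%:M.
    apply/matrixP => k i; rewrite !mxE /A ltn_ord vec_mxK mxE.
    by rewrite eq_sym.
  rewrite det1 [RHS](coord_vbasis BV); apply: eq_bigr => l _.
  rewrite scale1r /A ltnNge leq_addr /= mxE eqxx mulr1n /c.
  rewrite (bigD1 l) //= eqxx mul1r big1 ?addr0 // => l' ne.
  rewrite eqn_add2l (_ : (l == l' :> nat) = false) ?mul0r //.
  by apply/eqP => /val_inj e; rewrite e eqxx in ne.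
- move=> [A <-]; rewrite hP.
  apply: rpred_sum => l _; apply: rpredZ; apply: rpredZ.
  by apply: vbasis_mem; apply: mem_nth; rewrite size_tuple.
Qed.
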